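(* Let $\alpha_1,\alpha_2\ge0$ with $\alpha_1+\alpha_2=1$ and $\alpha_2\ge\alpha_1$. Consider problem (P3): maximize $r$ over $(r,r_1,r_2,x,p_1,p_2)$ with $x\in\mathbb{R}$, subject to $r_k\ge\alpha_kr$ for $k=1,2$, $(r_1,r_2)\in\mathcal{C}_{\rm MAC}(x,p_1,p_2)$, $p_1+p_2\le\bar P$, $p_1,p_2\ge0$. Then there always exists an optimal UAV hovering location $x^*$ for (P3) with $0\le x^*\le D/2$.
   Context: Fix $D>0$, $H>0$, $\beta_0>0$, $\bar P>0$. Ground users GU 1, GU 2 are at horizontal positions $x_1=-D/2$, $x_2=D/2$; for a fixed UAV horizontal position $x$ (altitude $H$), $h_k(x)=\beta_0/((x-x_k)^2+H^2)$. For $p_1,p_2\ge0$, $\mathcal{C}_{\rm MAC}(x,p_1,p_2)$ is the set of $(r_1,r_2)$ with $r_1,r_2\ge0$, $r_1\le\log_2(1+p_1h_1(x))$, $r_2\le\log_2(1+p_2h_2(x))$, $r_1+r_2\le\log_2(1+p_1h_1(x)+p_2h_2(x))$. *)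

(* Defs.v *)
From Stdlib Require Import Reals.
Open Scope R_scope.

Definition log2 (y : R) : R := ln y / ln 2.

(* Channel power gain from UAV at horizontal position x (altitude H) to the
   ground user located at horizontal position xk. *)
Definition gain (beta0 H xk x : R) : R := beta0 / ((x - xk) ^ 2 + H ^ 2).

Definition h1 (D H beta0 x : R) : R := gain beta0 H (- D / 2) x.
Definition h2 (D H beta0 x : R) : R := gain beta0 H (D / 2) x.

Definition C_MAC (D H beta0 x p1 p2 r1 r2 : R) : Prop :=
  0 <= r1 /\ 0 <= r2 /\
  r1 <= log2 (1 + p1 * h1 D H beta0 x) /\
  r2 <= log2 (1 + p2 * h2 D H beta0 x) /\
  r1 + r2 <= log2 (1 + p1 * h1 D H beta0 x + p2 * h2 D H beta0 x).

Definition P3_feasible (D H beta0 Pbar a1 a2 : R) (r r1 r2 x p1 p2 : R) : Prop :=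
  r1 >= a1 * r /\ r2 >= a2 * r /\
  C_MAC D H beta0 x p1 p2 r1 r2 /\
  p1 + p2 <= Pbar /\ 0 <= p1 /\ 0 <= p2.

Definition P3_optimal (D H beta0 Pbar a1 a2 : R) (r r1 r2 x p1 p2 : R) : Prop :=
  P3_feasible D H beta0 Pbar a1 a2 r r1 r2 x p1 p2 /\
  forall r' r1' r2' x' p1' p2',
    P3_feasible D H beta0 Pbar a1 a2 r' r1' r2' x' p1' p2' -> r' <= r.

(* Main.v *)
Require Import Defs.
From Stdlib Require Import Reals.
From Stdlib Require Import Lra Psatz Classical.
Open Scope R_scope.

Lemma ln2_pos : 0 < ln 2.
Proof. rewrite <- ln_1. apply ln_increasing; lra. Qed.

Lemma exp_le_mono x y : x <= y -> exp x <= exp y.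
Proof. intros [Hg|Hg]; [left; apply exp_increasing; exact Hg| subst; lra]. Qed.

Lemma ln_le_mono x y : 0 < x -> x <= y -> ln x <= ln y.
Proof. intros Hx [Hg|Hg]; [left; apply ln_increasing; lra| subst; lra]. Qed.

Lemma log2_exp t : log2 (exp (t * ln 2)) = t.
Proof. unfold log2. rewrite ln_exp. field. pose proof ln2_pos; lra. Qed.

Lemma log2_ge t y : exp (t * ln 2) <= y -> t <= log2 y.
Proof.
  intros Hg. unfold log2. pose proof ln2_pos.
  assert (t*ln 2 <= ln y).
  { rewrite <- (ln_exp (t*ln 2)). apply ln_le_mono; [apply exp_pos|exact Hg]. }
  apply Rmult_le_reg_r with (ln 2); auto. unfold Rdiv. rewrite Rmult_assoc, Rinv_l; lra.
Qed.

Lemma log2_le t y : 0 < y -> t <= log2 y -> exp (t * ln 2) <= y.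
Proof.
  intros Hy Hg. unfold log2 in Hg. pose proof ln2_pos.
  assert (t*ln 2 <= ln y).
  { apply Rmult_le_compat_r with (r:=ln 2) in Hg; [|lra]. unfold Rdiv in Hg.
    rewrite Rmult_assoc, Rinv_l in Hg; lra. }
  rewrite <- (exp_ln y) by exact Hy. apply exp_le_mono; exact H0.
Qed.

Definition E (t : R) := exp (t * ln 2).
Definition q1 (D Hg x : R) := (x - - D / 2) ^ 2 + Hg ^ 2.
Definition q2 (D Hg x : R) := (x - D / 2) ^ 2 + Hg ^ 2.
Definition Af a1 r := E (a1 * r) - 1.
Definition Bf a1 r := E r - E (a1 * r).
Definition cost D Hg a1 r x := Af a1 r * q1 D Hg x + Bf a1 r * q2 D Hg x.
Definition ok D Hg beta0 Pbar a1 r :=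
  0 <= r /\ exists x, 0 <= x <= D / 2 /\ cost D Hg a1 r x <= Pbar * beta0.

Lemma E_ge1 t : 0 <= t -> 1 <= E t.
Proof. intros; unfold E. rewrite <- exp_0. apply exp_le_mono. pose proof ln2_pos; nra. Qed.

Lemma E_mono s t : s <= t -> E s <= E t.
Proof. intros; unfold E. apply exp_le_mono. pose proof ln2_pos; nra. Qed.

Lemma E_split a1 a2 r : a1 + a2 = 1 -> E r = E (a1 * r) * E (a2 * r).
Proof. intros Hs; unfold E. rewrite <- exp_plus. f_equal.
  replace r with ((a1 + a2) * r) at 1 by (rewrite Hs; ring). ring. Qed.

Lemma key A B u v Q1 Q2 : 0 <= Q2 -> Q2 <= Q1 -> A <= u -> A <= v -> A + B <= u + v ->
  A*Q1 + B*Q2 <= u*Q1 + v*Q2 /\ A*Q1 + B*Q2 <= v*Q1 + u*Q2.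
Proof. intros. split; nra. Qed.

Lemma clamp D Hg y : 0 < D -> 0 <= y ->
  let x := Rmin y (D/2) in
  0 <= x <= D/2 /\ q1 D Hg x <= q1 D Hg y /\ q2 D Hg x <= q2 D Hg y /\
  q2 D Hg x <= q1 D Hg x /\ 0 <= q2 D Hg x.
Proof.
  intros HD Hy x. unfold x, Rmin, q1, q2. destruct (Rle_dec y (D/2)); repeat split; try nra.
Qed.

Lemma q_pos D Hg x : 0 < Hg -> 0 < q1 D Hg x /\ 0 < q2 D Hg x.
Proof. intros HH; unfold q1, q2. pose proof (pow2_ge_0 (x - - D/2)). pose proof (pow2_ge_0 (x - D/2)). simpl in *; split; nra. Qed.

Lemma dominance D Hg beta0 Pbar a1 a2 r r1 r2 x p1 p2 :
  0 < D -> 0 < Hg -> 0 < beta0 -> 0 <= a1 -> a1 + a2 = 1 -> a1 <= a2 -> 0 <= r ->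
  P3_feasible D Hg beta0 Pbar a1 a2 r r1 r2 x p1 p2 -> ok D Hg beta0 Pbar a1 r.
Proof.
  intros HD HH Hb Ha1 Hs Hle Hr [Hr1 [Hr2 [[H0r1 [H0r2 [C1 [C2 C12]]]] [HP [Hp1 Hp2]]]]].
  split; [exact Hr|].
  destruct (q_pos D Hg x HH) as [Hq1 Hq2].
  set (u := p1 * h1 D Hg beta0 x). set (v := p2 * h2 D Hg beta0 x).
  assert (Hu : u * q1 D Hg x = p1 * beta0).
  { unfold u, h1, gain, q1 in *. field. lra. }
  assert (Hv : v * q2 D Hg x = p2 * beta0).
  { unfold v, h2, gain, q2 in *. field. lra. }
  assert (hh1 : 0 < h1 D Hg beta0 x) by (unfold h1, gain; apply Rdiv_lt_0_compat; [lra| exact Hq1]).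
  assert (hh2 : 0 < h2 D Hg beta0 x) by (unfold h2, gain; apply Rdiv_lt_0_compat; [lra| exact Hq2]).
  assert (u0 : 0 <= u) by (unfold u; nra).
  assert (v0 : 0 <= v) by (unfold v; nra).
  assert (e1 : E (a1 * r) <= 1 + u) by (apply log2_le; [lra| fold u in C1; lra]).
  assert (e2 : E (a2 * r) <= 1 + v) by (apply log2_le; [lra| fold v in C2; lra]).
  assert (e : E r <= 1 + u + v).
  { apply log2_le; [lra|]. fold u v in C12. nra. }
  assert (e12 : E (a1 * r) <= E (a2 * r)) by (apply E_mono; nra).
  assert (hA1 : Af a1 r <= u) by (unfold Af; lra).
  assert (hA2 : Af a1 r <= v) by (unfold Af; lra).
  assert (hAB : Af a1 r + Bf a1 r <= u + v) by (unfold Af, Bf; lra).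
  assert (budget : u * q1 D Hg x + v * q2 D Hg x <= Pbar * beta0) by nra.
  destruct (Rle_or_lt 0 x) as [Hx|Hx].
  - destruct (clamp D Hg x HD Hx) as [Hc [c1 [c2 [c3 c4]]]].
    exists (Rmin x (D/2)). split; [exact Hc|].
    destruct (key (Af a1 r) (Bf a1 r) u v _ _ c4 c3 hA1 hA2 hAB) as [k _].
    unfold cost. nra.
  - assert (Hy : 0 <= - x) by lra.
    destruct (clamp D Hg (-x) HD Hy) as [Hc [c1 [c2 [c3 c4]]]].
    exists (Rmin (-x) (D/2)). split; [exact Hc|].
    destruct (key (Af a1 r) (Bf a1 r) u v _ _ c4 c3 hA1 hA2 hAB) as [_ k].
    assert (s1 : q1 D Hg (-x) = q2 D Hg x) by (unfold q1, q2; unfold Rdiv; ring).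
    assert (s2 : q2 D Hg (-x) = q1 D Hg x) by (unfold q1, q2; unfold Rdiv; ring).
    rewrite s1, s2 in *.
    unfold cost. nra.
Qed.

Lemma cont_eps f m : continuity_pt f m -> forall eps, 0 < eps ->
  exists del, 0 < del /\ forall r, Rabs (r - m) < del -> Rabs (f r - f m) < eps.
Proof.
  intros Hc eps He. destruct (Hc eps He) as [del [Hd Hr]]. exists del. split; [exact Hd|].
  intros r Hr'. destruct (Req_dec r m) as [->|Hne].
  - unfold Rminus. rewrite Rplus_opp_r, Rabs_R0. exact He.
  - apply (Hr r). split; [split; [exact I| intro; apply Hne; symmetry; assumption]| exact Hr'].
Qed.

Lemma E_lin r : 0 <= r -> 1 + r * ln 2 <= E r.
Proof.
  intros Hr. unfold E. destruct (Req_dec r 0) as [->|Hne].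
  - rewrite Rmult_0_l, exp_0. lra.
  - left. apply exp_ineq1. pose proof ln2_pos. intro Hz. apply Rmult_integral in Hz. lra.
Qed.

Lemma q_bound D Hg x : 0 <= x <= D / 2 ->
  q1 D Hg x <= D ^ 2 + Hg ^ 2 /\ q2 D Hg x <= D ^ 2 + Hg ^ 2.
Proof.
  intros Hx. unfold q1, q2.
  replace (x - - D / 2) with (x + D / 2) by (unfold Rdiv; ring).
  set (d := D / 2) in *. replace D with (2 * d) by (unfold d; field).
  simpl. split; nra.
Qed.

Lemma Af_nonneg a1 r : 0 <= a1 -> 0 <= r -> 0 <= Af a1 r.
Proof. intros. unfold Af. pose proof (E_ge1 (a1 * r)). assert (0 <= a1 * r) by nra. lra. Qed.

Lemma Bf_nonneg a1 r : a1 <= 1 -> 0 <= r -> 0 <= Bf a1 r.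
Proof. intros. unfold Bf. pose proof (E_mono (a1 * r) r). assert (a1 * r <= r) by nra. lra. Qed.

Theorem proposition2 (D H beta0 Pbar a1 a2 : R) :
  0 < D -> 0 < H -> 0 < beta0 -> 0 < Pbar ->
  0 <= a1 -> 0 <= a2 -> a1 + a2 = 1 -> a1 <= a2 ->
  exists r r1 r2 x p1 p2,
    P3_optimal D H beta0 Pbar a1 a2 r r1 r2 x p1 p2 /\
    0 <= x <= D / 2.
Proof.
  intros HD HH Hb HP Ha1 Ha2 Hs Hle.
  pose proof ln2_pos as Hl2.
  assert (Ha1' : a1 <= 1) by lra.
  assert (HK : 0 < D ^ 2 + H ^ 2) by (simpl; nra).
  set (S := fun r => ok D H beta0 Pbar a1 r).
  assert (Hbound : bound S).
  { exists (Pbar * beta0 / (ln 2 * H ^ 2)). intros r [Hr [x [Hx Hc]]].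
    destruct (q_pos D H x HH) as [Hq1 Hq2].
    assert (g1 : H ^ 2 <= q1 D H x) by (unfold q1; pose proof (pow2_ge_0 (x - - D / 2)); lra).
    assert (g2 : H ^ 2 <= q2 D H x) by (unfold q2; pose proof (pow2_ge_0 (x - D / 2)); lra).
    pose proof (Af_nonneg a1 r Ha1 Hr). pose proof (Bf_nonneg a1 r Ha1' Hr).
    pose proof (E_lin r Hr).
    assert (Hsum : Af a1 r + Bf a1 r = E r - 1) by (unfold Af, Bf; ring).
    assert (HH2 : 0 < H ^ 2) by (simpl; nra).
    assert (Hfin : r * (ln 2 * H ^ 2) <= Pbar * beta0).
    { unfold cost in Hc. nra. }
    apply Rmult_le_reg_r with (ln 2 * H ^ 2); [nra|].
    replace (Pbar * beta0 / (ln 2 * H ^ 2) * (ln 2 * H ^ 2)) with (Pbar * beta0) by (field; lra).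
    exact Hfin. }
  assert (Hne : exists r, S r).
  { exists 0. split; [lra|]. exists 0. split; [lra|].
    unfold cost, Af, Bf, E. rewrite !Rmult_0_r, !Rmult_0_l, exp_0.
    replace ((1 - 1) * q1 D H 0 + (1 - 1) * q2 D H 0) with 0 by ring. nra. }
  destruct (completeness S Hbound Hne) as [m [Hub Hlub]].
  assert (Hm0 : 0 <= m) by (apply Hub; destruct Hne as [r0 Hr0]; split; [lra|]; exists 0; split; [lra|];
    unfold cost, Af, Bf, E; rewrite !Rmult_0_r, !Rmult_0_l, exp_0;
    replace ((1 - 1) * q1 D H 0 + (1 - 1) * q2 D H 0) with 0 by ring; nra).
  assert (Hok : ok D H beta0 Pbar a1 m).
  { apply NNPP. intro Hnok.
    assert (Hgt : forall x, 0 <= x <= D / 2 -> Pbar * beta0 < cost D H a1 m x).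
    { intros x Hx. apply Rnot_le_lt. intro Hc. apply Hnok. split; [exact Hm0|]. exists x; auto. }
    destruct (continuity_ab_min (cost D H a1 m) 0 (D / 2)) as [mx [Hmin Hmx]].
    { lra. }
    { intros c _. unfold cost, q1, q2. reg. }
    set (eps := cost D H a1 m mx - Pbar * beta0).
    assert (Heps : 0 < eps) by (unfold eps; pose proof (Hgt mx Hmx); lra).
    set (K := D ^ 2 + H ^ 2).
    set (eta := eps / (2 * K)).
    assert (Heta : 0 < eta) by (unfold eta; apply Rdiv_lt_0_compat; unfold K; lra).
    destruct (cont_eps (fun r => Af a1 r) m ltac:(unfold Af, E; reg) eta Heta) as [dA [HdA HA]].
    destruct (cont_eps (fun r => Bf a1 r) m ltac:(unfold Bf, E; reg) eta Heta) as [dB [HdB HB]].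
    set (del := Rmin dA dB).
    assert (Hdel : 0 < del) by (unfold del; apply Rmin_pos; auto).
    assert (Hex : exists r, S r /\ m - del < r).
    { apply NNPP. intro Hn.
      assert (Hub' : is_upper_bound S (m - del)).
      { intros r Hr. apply Rnot_lt_le. intro Hlt. apply Hn. exists r; auto. }
      pose proof (Hlub _ Hub'). lra. }
    destruct Hex as [r [Hr Hrm]].
    pose proof (Hub r Hr) as Hrle.
    assert (Habs : Rabs (r - m) < del).
    { rewrite Rabs_left1 by lra. lra. }
    assert (HdelA : del <= dA) by apply Rmin_l.
    assert (HdelB : del <= dB) by apply Rmin_r.
    pose proof (HA r ltac:(lra)) as HA'. pose proof (HB r ltac:(lra)) as HB'.
    simpl in HA', HB'.
    apply Rabs_def2 in HA'. apply Rabs_def2 in HB'.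
    destruct Hr as [Hr0 [x [Hx Hcx]]].
    destruct (q_pos D H x HH) as [Hq1 Hq2].
    destruct (q_bound D H x Hx) as [Hk1 Hk2]. fold K in Hk1, Hk2.
    assert (t1 : (Af a1 m - Af a1 r) * q1 D H x < eta * q1 D H x)
      by (apply Rmult_lt_compat_r; lra).
    assert (t2 : (Bf a1 m - Bf a1 r) * q2 D H x < eta * q2 D H x)
      by (apply Rmult_lt_compat_r; lra).
    assert (t3 : eta * q1 D H x <= eta * K) by (apply Rmult_le_compat_l; lra).
    assert (t4 : eta * q2 D H x <= eta * K) by (apply Rmult_le_compat_l; lra).
    assert (t5 : 2 * (eta * K) = eps) by (unfold eta; field; unfold K; lra).
    pose proof (Hmin x Hx) as Hmx'.
    assert (Heps' : eps = cost D H a1 m mx - Pbar * beta0) by reflexivity.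
    clearbody eps eta K.
    assert (ex1 : (Af a1 m - Af a1 r) * q1 D H x = Af a1 m * q1 D H x - Af a1 r * q1 D H x) by ring.
    assert (ex2 : (Bf a1 m - Bf a1 r) * q2 D H x = Bf a1 m * q2 D H x - Bf a1 r * q2 D H x) by ring.
    unfold cost in Hcx, Hmx'. unfold cost in Heps'. lra. }
  destruct Hok as [_ [x [Hx Hc]]].
  destruct (q_pos D H x HH) as [Hq1 Hq2].
  pose proof (Af_nonneg a1 m Ha1 Hm0) as HA0. pose proof (Bf_nonneg a1 m Ha1' Hm0) as HB0.
  exists m, (a1 * m), (a2 * m), x, (Af a1 m * q1 D H x / beta0), (Bf a1 m * q2 D H x / beta0).
  split; [split|exact Hx].
  - assert (p1h1 : Af a1 m * q1 D H x / beta0 * h1 D H beta0 x = Af a1 m).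
    { unfold q1 in *; unfold h1, gain. field. lra. }
    assert (p2h2 : Bf a1 m * q2 D H x / beta0 * h2 D H beta0 x = Bf a1 m).
    { unfold q2 in *; unfold h2, gain. field. lra. }
    pose proof (E_split a1 a2 m Hs) as Hsp.
    assert (e1 : 1 <= E (a1 * m)) by (apply E_ge1; nra).
    assert (e2 : 1 <= E (a2 * m)) by (apply E_ge1; nra).
    unfold P3_feasible, C_MAC. rewrite p1h1, p2h2.
    split; [lra|]. split; [lra|]. split; [split; [nra|split; [nra|split; [|split]]]|split; [|split]].
    + replace (1 + Af a1 m) with (E (a1 * m)) by (unfold Af; ring). unfold E. rewrite log2_exp. lra.
    + apply log2_ge. fold (E (a2 * m)). unfold Bf. nra.
    + replace (1 + Af a1 m + Bf a1 m) with (E m) by (unfold Af, Bf; ring). unfold E. rewrite log2_exp.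
      nra.
    + assert (Heq : Af a1 m * q1 D H x / beta0 + Bf a1 m * q2 D H x / beta0 = cost D H a1 m x / beta0)
        by (unfold cost; field; lra).
      rewrite Heq. apply Rmult_le_reg_r with beta0; [lra|]. unfold Rdiv. rewrite Rmult_assoc, Rinv_l; lra.
    + unfold Rdiv. apply Rmult_le_pos; [apply Rmult_le_pos; lra|left; apply Rinv_0_lt_compat; lra].
    + unfold Rdiv. apply Rmult_le_pos; [apply Rmult_le_pos; lra|left; apply Rinv_0_lt_compat; lra].
  - intros r' r1' r2' x' p1' p2' Hf.
    destruct (Rle_or_lt 0 r') as [Hr'|Hr'].
    + apply Hub. exact (dominance D H beta0 Pbar a1 a2 r' r1' r2' x' p1' p2' HD HH Hb Ha1 Hs Hle Hr' Hf).
    + lra.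
Qed.
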